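(* Let $R$ be an integral domain and $\mathfrak p$ a prime ideal of $R$ such that $\widehat{R}_{\mathfrak p}$ is an integral domain containing $R$ (via the canonical map). Let $f\in R[[X]]$ be $\widehat{\mathfrak p}$-distinguished in $\widehat{R}_{\mathfrak p}[[X]]$. Suppose that $\widehat{R}_{\mathfrak p}/f_0\widehat{R}_{\mathfrak p}\cong R/f_0R$ as $R$-algebras and that every divisor of $f_0$ in $\widehat{R}_{\mathfrak p}$ is associate in $\widehat{R}_{\mathfrak p}$ to a divisor of $f_0$ in $R$. Then $f$ is irreducible in $R[[X]]$ if and only if the Weierstrass polynomial $P_f$ associated to $f$ in $\widehat{R}_{\mathfrak p}[X]$ is irreducible in $\widehat{R}_{\mathfrak p}[X]$. More precisely: (1) if $f=gh$ with nonunits $g,h\in R[[X]]$, then $g$ and $h$ are $\widehat{\mathfrak p}$-distinguished in $\widehat{R}_{\mathfrak p}[[X]]$, $P_f=P_gP_h$, and $P_g,P_h$ are nonunits in $\widehat{R}_{\mathfrak p}[X]$; (2) if $P_f=GH$ with nonunits $G,H\in\widehat{R}_{\mathfrak p}[X]$, then $f=gh$ for some nonunits $g,h\in R[[X]]$ with $G=uP_g$ and $H=u^{-1}P_h$ for a unique unit $u\in\widehat{R}_{\mathfrak p}$.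
   Context: $\widehat{R}_{\mathfrak p}=\varprojlim R/\mathfrak p^n$ is the $\mathfrak p$-adic completion and $\widehat{\mathfrak p}$ the closure of the image of $\mathfrak p$ in it; $\widehat{R}_{\mathfrak p}$ is complete with respect to the filtration by closures of powers of $\mathfrak p$. A series $g\in S[[X]]$ is $\mathfrak b$-distinguished of order $n$ if its coefficients $g_i$ lie in $\mathfrak b$ for $i<n$ and $g_n$ is a unit mod $\mathfrak b$; for a $\widehat{\mathfrak p}$-distinguished $g$, $P_g$ is the unique monic polynomial in $\widehat{R}_{\mathfrak p}[X]$ with non-leading coefficients in $\widehat{\mathfrak p}$ such that $g=UP_g$ for some unit $U\in\widehat{R}_{\mathfrak p}[[X]]$. $f_0$ is the constant term of $f$. *)

(* Defs.v *)
From HB Require Import structures.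
From mathcomp Require Import all_boot all_order all_algebra.
From Stdlib Require Import ClassicalEpsilon.
Set Implicit Arguments. Unset Strict Implicit. Unset Printing Implicit Defensive.
Import Order.TTheory GRing.Theory Num.Theory.
Local Open Scope ring_scope.

Definition is_ideal (R : comRingType) (I : R -> Prop) : Prop :=
  I 0 /\ (forall x y, I x -> I y -> I (x + y)) /\ (forall x, I x -> I (- x)) /\
  (forall a x, I x -> I (a * x)).

Definition prime_ideal (R : comRingType) (I : R -> Prop) : Prop :=
  is_ideal I /\ ~ I 1 /\ (forall a b, I (a * b) -> I a \/ I b).

Fixpoint ideal_pow (R : comRingType) (I : R -> Prop) (n : nat) : R -> Prop :=
  match n with
  | 0%N => fun _ => True
  | m.+1 => fun x => exists s : seq (R * R),
      x = \sum_(ab <- s) (ab.1 * ab.2) /\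
      (forall ab, ab \in s -> ideal_pow I m ab.1 /\ I ab.2)
  end.

(* (S, iota, J) is the p-adic completion  lim R/p^n  of R: J n is the kernel of
   the projection S -> R/p^n.  These conditions say exactly that the induced map
   S -> lim R/p^n is a ring isomorphism compatible with the canonical maps. *)
Definition is_padic_completion (R S : comRingType) (iota : {rmorphism R -> S})
    (p : R -> Prop) (J : nat -> S -> Prop) : Prop :=
  (forall n, is_ideal (J n)) /\
  (forall n s, J n.+1 s -> J n s) /\
  (forall n r, J n (iota r) <-> ideal_pow p n r) /\
  (forall n s, exists r, J n (s - iota r)) /\
  (forall s, (forall n, J n s) -> s = 0) /\
  (forall r : nat -> R, (forall n, ideal_pow p n (r n.+1 - r n)) ->
     exists s, forall n, J n (s - iota (r n))).

(* closure of iota(p) in the topology defined by the filtration J *)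
Definition phat (R S : comRingType) (iota : {rmorphism R -> S})
    (p : R -> Prop) (J : nat -> S -> Prop) : S -> Prop :=
  fun s => forall n, exists r, p r /\ J n (s - iota r).

Definition pser (R : Type) := nat -> R.

Definition ps_mul (R : comRingType) (f g : pser R) : pser R :=
  fun n => \sum_(i < n.+1) f i * g (n - i)%N.

Definition ps_one (R : comRingType) : pser R := fun n => (n == 0%N)%:R.

Definition ps_unit (R : comRingType) (f : pser R) : Prop :=
  exists g, ps_mul f g = ps_one R.

Definition ps_irreducible (R : comRingType) (f : pser R) : Prop :=
  f <> (fun _ => 0) /\ ~ ps_unit f /\
  (forall g h, f = ps_mul g h -> ps_unit g \/ ps_unit h).

Definition ps_map (R S : comRingType) (iota : R -> S) (f : pser R) : pser S :=
  fun n => iota (f n).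

Definition ps_of_poly (S : comRingType) (P : {poly S}) : pser S := fun n => P`_n.

Definition poly_irreducible (S : idomainType) (P : {poly S}) : Prop :=
  P != 0 /\ P \isn't a GRing.unit /\
  (forall G H, P = G * H -> G \is a GRing.unit \/ H \is a GRing.unit).

Definition distinguished (S : comRingType) (b : S -> Prop) (g : pser S) : Prop :=
  exists n, (forall i, (i < n)%N -> b (g i)) /\ exists y, b (g n * y - 1).

Definition is_wpoly (S : comRingType) (b : S -> Prop) (g : pser S) (P : {poly S}) : Prop :=
  P \is monic /\ (forall i, (i < (size P).-1)%N -> b P`_i) /\
  exists U, ps_unit U /\ g = ps_mul U (ps_of_poly P).

Definition WP (S : comRingType) (b : S -> Prop) (g : pser S) : {poly S} :=
  epsilon (inhabits 0) (is_wpoly b g).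

(* Main.v *)
Require Import Defs.
From HB Require Import structures.
From mathcomp Require Import all_boot all_order all_algebra.
From mathcomp Require Import boolp.
From mathcomp Require Import zify ring.
From Stdlib Require Import ClassicalEpsilon.
Import GRing.Theory.
Set Implicit Arguments. Unset Strict Implicit. Unset Printing Implicit Defensive.
Local Open Scope ring_scope.
Section PS.
Variable R : comNzRingType.
HB.instance Definition _ := Choice.on (pser R).
Definition ps_add (f g : pser R) : pser R := fun n => f n + g n.
Definition ps_opp (f : pser R) : pser R := fun n => - f n.
Definition ps_zero : pser R := fun _ => 0.
Lemma ps_addA : associative ps_add.
Proof. by move=> f g h; apply/funext=> n; rewrite /ps_add addrA. Qed.
Lemma ps_addC : commutative ps_add.
Proof. by move=> f g; apply/funext=> n; rewrite /ps_add addrC. Qed.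
Lemma ps_add0 : left_id ps_zero ps_add.
Proof. by move=> f; apply/funext=> n; rewrite /ps_add /ps_zero add0r. Qed.
Lemma ps_addN : left_inverse ps_zero ps_opp ps_add.
Proof. by move=> f; apply/funext=> n; rewrite /ps_add /ps_opp /ps_zero addNr. Qed.
HB.instance Definition _ := GRing.isZmodule.Build (pser R) ps_addA ps_addC ps_add0 ps_addN.

Definition Tr (f : pser R) n : {poly R} := \poly_(j < n.+1) f j.
Lemma ps_mul_Tr f g n i : (i <= n)%N -> ps_mul f g i = (Tr f n * Tr g n)`_i.
Proof.
move=> le; rewrite coefM /ps_mul; apply: eq_bigr => j _.
rewrite /Tr !coef_poly.
have hj : (j < n.+1)%N by apply: leq_ltn_trans (leq_ord j) _.
have hj' : (i - j < n.+1)%N by rewrite ltnS; apply: leq_trans (leq_subr _ _) le.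
by rewrite hj hj'.
Qed.
Lemma ps_mulA : associative (@ps_mul R).
Proof.
move=> f g h; apply/funext=> n.
have -> : ps_mul f (ps_mul g h) n = (Tr f n * (Tr g n * Tr h n))`_n.
  rewrite coefM /ps_mul; apply: eq_bigr => j _.
  rewrite -(@ps_mul_Tr _ _ n _ (leq_subr j n)) /Tr coef_poly.
  by rewrite (leq_ltn_trans (leq_ord j) (ltnSn n)).
have -> : ps_mul (ps_mul f g) h n = ((Tr f n * Tr g n) * Tr h n)`_n.
  rewrite coefM /ps_mul; apply: eq_bigr => j _.
  rewrite -(@ps_mul_Tr _ _ n _ (ltnSE (ltn_ord j))) /Tr coef_poly.
  by rewrite ltnS leq_subr.
by rewrite mulrA.
Qed.
Lemma ps_mul_Tr' f g n : ps_mul f g n = (Tr f n * Tr g n)`_n.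
Proof. exact: ps_mul_Tr. Qed.
Lemma ps_mulC : commutative (@ps_mul R).
Proof. by move=> f g; apply/funext=> n; rewrite !ps_mul_Tr' mulrC. Qed.
Lemma ps_mul1 : left_id (ps_one R) (@ps_mul R).
Proof.
move=> f; apply/funext=> n; rewrite ps_mul_Tr'.
have -> : Tr (ps_one R) n = 1.
  apply/polyP=> i; rewrite /Tr coef_poly coef1 /ps_one.
  by case: ifP=> // /negbT; rewrite -leqNgt; case: i => //.
by rewrite mul1r /Tr coef_poly ltnSn.
Qed.
Lemma ps_mulDl : left_distributive (@ps_mul R) ps_add.
Proof.
move=> f g h; apply/funext=> n; rewrite /ps_mul /ps_add -big_split /=.
by apply: eq_bigr=> i _; rewrite mulrDl.
Qed.
Lemma ps_one_neq0 : ps_one R != 0.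
Proof.
apply/eqP=> /(congr1 (fun f : pser R => f 0%N)); rewrite /ps_one /=.
by move/eqP; rewrite oner_eq0.
Qed.
HB.instance Definition _ := GRing.Zmodule_isComNzRing.Build (pser R)
  ps_mulA ps_mulC ps_mul1 ps_mulDl ps_one_neq0.
Lemma psmulE (f g : pser R) : f * g = ps_mul f g. Proof. by []. Qed.
Lemma ps1E : (1 : pser R) = ps_one R. Proof. by []. Qed.
Lemma psaddE (f g : pser R) n : (f + g) n = f n + g n. Proof. by []. Qed.
Lemma ps0E n : (0 : pser R) n = 0. Proof. by []. Qed.
Lemma psoppE (f : pser R) n : (- f) n = - f n. Proof. by []. Qed.
Lemma pscoefM (f g : pser R) n : (f * g) n = \sum_(i < n.+1) f i * g (n - i)%N.
Proof. by []. Qed.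
Lemma psmul0c (f g : pser R) : (f * g) 0%N = f 0%N * g 0%N.
Proof. by rewrite pscoefM big_ord1. Qed.
Lemma pssumE (I : Type) (r : seq I) (P : pred I) (F : I -> pser R) i :
  (\sum_(k <- r | P k) F k) i = \sum_(k <- r | P k) F k i.
Proof. by apply: (big_morph (fun f : pser R => f i)) => //. Qed.
Lemma ps1coef n : (1 : pser R) n = (n == 0%N)%:R. Proof. by []. Qed.

Lemma ideal0 (I : R -> Prop) : is_ideal I -> I 0. Proof. by case. Qed.
Lemma idealD (I : R -> Prop) x y : is_ideal I -> I x -> I y -> I (x + y).
Proof. by case=> _ [] H _; apply: H. Qed.
Lemma idealN (I : R -> Prop) x : is_ideal I -> I x -> I (- x).
Proof. by case=> _ [] _ [] H _; apply: H. Qed.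
Lemma idealB (I : R -> Prop) x y : is_ideal I -> I x -> I y -> I (x - y).
Proof. by move=> HI hx hy; apply: idealD => //; apply: idealN. Qed.
Lemma idealMl (I : R -> Prop) a x : is_ideal I -> I x -> I (a * x).
Proof. by case=> _ [] _ [] _ H; apply: H. Qed.
Lemma idealMr (I : R -> Prop) a x : is_ideal I -> I x -> I (x * a).
Proof. by move=> HI hx; rewrite mulrC; apply: idealMl. Qed.
Lemma ideal_sum (I : R -> Prop) (T : Type) (r : seq T) (P : pred T) (F : T -> R) :
  is_ideal I -> (forall i, P i -> I (F i)) -> I (\sum_(i <- r | P i) F i).
Proof.
move=> HI HF; apply: (big_ind I) => //; first exact: ideal0.
by move=> x y; apply: idealD.
Qed.
Lemma ideal_eq0 : is_ideal (fun x : R => x = 0).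
Proof.
split=> //; split; first by move=> x y -> ->; rewrite addr0.
by split; [move=> x ->; rewrite oppr0 | move=> a x ->; rewrite mulr0].
Qed.

Lemma conv_low (I : R -> Prop) (f g : pser R) a b : is_ideal I ->
  (forall j, (j < a)%N -> I (f j)) -> (forall j, (j < b)%N -> I (g j)) ->
  forall i, (i < a + b)%N -> I ((f * g) i).
Proof.
move=> HI Hf Hg i lt; rewrite pscoefM; apply: ideal_sum => // j _.
case: (ltnP j a) => hj; first by apply: idealMr => //; apply: Hf.
apply: idealMl => //; apply: Hg.
have hji : (j <= i)%N := ltnSE (ltn_ord j).
rewrite ltn_subLR //; lia.
Qed.

Lemma conv_single (I : R -> Prop) (f g : pser R) n l : is_ideal I -> (l <= n)%N ->
  (forall j, (j <= n)%N -> j <> l -> I (f j * g (n - j)%N)) ->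
  I ((f * g) n - f l * g (n - l)%N).
Proof.
move=> HI hl H; rewrite pscoefM (bigD1 (Ordinal (leq_ltn_trans hl (ltnSn n)))) //=.
rewrite addrC addrK; apply: ideal_sum => // j hj; apply: H; first exact: ltnSE (ltn_ord j).
by move=> e; move: hj; rewrite -val_eqE /= e eqxx.
Qed.

Lemma ps_mul_eq (f v v' : pser R) n : (forall i, (i <= n)%N -> v i = v' i) ->
  (f * v) n = (f * v') n.
Proof.
move=> H; rewrite !pscoefM; apply: eq_bigr => i _; rewrite H //; exact: leq_subr.
Qed.

Definition psC (c : R) : pser R := fun n => if n == 0%N then c else 0.
Lemma psCmul c (f : pser R) n : (psC c * f) n = c * f n.
Proof.
rewrite pscoefM big_ord_recl /= subn0 big1 ?addr0 // => i _.
by rewrite /psC /= mul0r.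
Qed.
Lemma psC0 n : psC 0 n = 0. Proof. by rewrite /psC; case: ifP. Qed.

Definition xn (n : nat) : pser R := fun i => (i == n)%:R.
Lemma xnE (g : pser R) n m : (g * xn n) m = if (m < n)%N then 0 else g (m - n)%N.
Proof.
rewrite pscoefM; case: ltnP => h.
  apply: big1 => i _; rewrite /xn.
  have : (m - i != n)%N by rewrite neq_ltn (leq_ltn_trans (leq_subr _ _) h).
  by move/negbTE ->; rewrite mulr0.
rewrite (bigD1 (Ordinal (leq_ltn_trans (leq_subr n m) (ltnSn m)))) //= /xn.
rewrite subKn // eqxx mulr1 big1 ?addr0 // => i hi.
have : (m - i != n)%N.
  apply/eqP=> e; move: hi; rewrite -val_eqE /= -e subKn ?eqxx //.
  exact: ltnSE (ltn_ord i).
by move/negbTE ->; rewrite mulr0.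
Qed.

Lemma ps_pow_low (w : pser R) : w 0%N = 0 -> forall k i, (i < k)%N -> (w ^+ k) i = 0.
Proof.
move=> w0; elim=> [|k IH] i // lt.
rewrite exprS; apply: (@conv_low _ _ _ 1 k ideal_eq0) => //.
by case=> // _; rewrite w0.
Qed.
End PS.
Arguments xn {R} n.

Section PSinv.
Variable R : comUnitRingType.
Lemma ps_inv (f : pser R) : f 0%N \is a GRing.unit -> exists g, f * g = 1.
Proof.
move=> u; set c := (f 0%N)^-1.
set w := 1 - psC c * f.
have w0 : w 0%N = 0 by rewrite /w psaddE psoppE psCmul /c mulVr // subrr.
set v : pser R := fun n => (psC c * \sum_(k < n.+1) w ^+ k) n.
exists v; apply/funext=> n.
have H : forall N, (n <= N)%N -> (f * v) n = ((1 - w ^+ N.+1) : pser R) n.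
  move=> N le.
  have -> : (f * v) n = (f * (psC c * \sum_(k < N.+1) w ^+ k)) n.
    apply: ps_mul_eq => i hi; rewrite /v !psCmul !pssumE; congr (_ * _).
    rewrite -!(big_mkord xpredT (fun k => (w ^+ k) i)).
    have hiN : (i.+1 <= N.+1)%N by rewrite ltnS (leq_trans hi le).
    rewrite [RHS](big_cat_nat (leq0n i.+1) hiN) /=.
    rewrite [X in _ = _ + X]big1_seq ?addr0 // => k; rewrite mem_index_iota => /andP[_ /andP[hk _]].
    by apply: ps_pow_low.
  have e : psC c * f = 1 - w by rewrite /w opprB addrC subrK.
  by rewrite mulrA (mulrC f) e -opprB mulNr -subrX1 opprB.
rewrite (H n (leqnn n)) psaddE psoppE ps_pow_low ?subr0 //.
Qed.
End PSinv.

Section Map.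
Variables (R S : comNzRingType) (iota : {rmorphism R -> S}).
Lemma ps_mapM (f g : pser R) : ps_map iota (f * g) = ps_map iota f * ps_map iota g.
Proof.
apply/funext=> n; rewrite /ps_map !pscoefM rmorph_sum; apply: eq_bigr => i _.
by rewrite rmorphM.
Qed.
Lemma ps_mapD (f g : pser R) : ps_map iota (f + g) = ps_map iota f + ps_map iota g.
Proof. by apply/funext=> n; rewrite /ps_map !psaddE rmorphD. Qed.
Lemma ps_mapB (f g : pser R) : ps_map iota (f - g) = ps_map iota f - ps_map iota g.
Proof. by apply/funext=> n; rewrite /ps_map !psaddE !psoppE rmorphB. Qed.
Lemma ps_map1 : ps_map iota 1 = 1.
Proof. by apply/funext=> n; rewrite /ps_map !ps1coef rmorph_nat. Qed.
Lemma ps_mapC c : ps_map iota (psC c) = psC (iota c).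
Proof. by apply/funext=> n; rewrite /ps_map /psC; case: ifP => //; rewrite rmorph0. Qed.
Lemma ps_map_inj : injective iota -> injective (ps_map iota).
Proof.
move=> Hi f g e; apply/funext=> n; apply: Hi.
by have := congr1 (fun h => h n) e.
Qed.
End Map.

Fixpoint build (T : Type) (st : nat -> seq T -> T) (k : nat) : seq T :=
  if k is k'.+1 then rcons (build st k') (st k' (build st k')) else [::].
Lemma size_build T st k : size (@build T st k) = k.
Proof. by elim: k => //= k IH; rewrite size_rcons IH. Qed.
Lemma nth_build T (x0 : T) st k j : (j < k)%N -> nth x0 (build st k) j = st j (build st j).
Proof.
elim: k => // k IH; rewrite ltnS leq_eqVlt => /orP[/eqP ->|lt] /=.
  by rewrite nth_rcons size_build ltnn eqxx.
by rewrite nth_rcons size_build lt IH.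
Qed.

Section Compl.
Variables (R S : idomainType) (iota : {rmorphism R -> S}) (p : R -> Prop)
  (J : nat -> S -> Prop).
Hypothesis Hp : prime_ideal p.
Hypothesis Hc : is_padic_completion iota p J.

Lemma J_ideal n : is_ideal (J n). Proof. by case: Hc. Qed.
Lemma J_S n s : J n.+1 s -> J n s. Proof. by case: Hc => _ [] H _; apply: H. Qed.
Lemma J_mono m n s : (m <= n)%N -> J n s -> J m s.
Proof.
move=> le; elim: n le => [|n IH]; first by rewrite leqn0 => /eqP ->.
rewrite leq_eqVlt => /orP[/eqP -> //|]; rewrite ltnS => h hs.
by apply: IH => //; apply: J_S.
Qed.
Lemma J_iota n r : J n (iota r) <-> ideal_pow p n r. Proof. by case: Hc => _ [] _ [] H _. Qed.
Lemma J_approx n s : exists r, J n (s - iota r). Proof. by case: Hc => _ [] _ [] _ [] H _. Qed.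
Lemma J_sep s : (forall n, J n s) -> s = 0. Proof. by case: Hc => _ [] _ [] _ [] _ [] H _; apply: H. Qed.
Lemma J_cauchy (r : nat -> R) : (forall n, ideal_pow p n (r n.+1 - r n)) ->
     exists s, forall n, J n (s - iota (r n)).
Proof. by case: Hc => _ [] _ [] _ [] _ [] _ H; apply: H. Qed.

Lemma J0 s : J 0 s.
Proof.
have [r hr] := J_approx 0 s.
have hi : J 0 (iota r) by apply/J_iota.
by have := idealD (J_ideal 0) hr hi; rewrite subrK.
Qed.

Lemma ideal_pow1 r : ideal_pow p 1 r <-> p r.
Proof.
have Hpi : is_ideal p by case: Hp.
split.
  case=> s [-> H]; rewrite big_seq; apply: ideal_sum => // ab hab.
  by apply: idealMl => //; case: (H ab hab).
move=> hr; exists [:: (1, r)]; rewrite big_seq1 mul1r; split => // ab.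
by rewrite inE => /eqP ->.
Qed.

Lemma J1_iota r : J 1 (iota r) <-> p r.
Proof. by rewrite -ideal_pow1; apply: J_iota. Qed.

Lemma J_mul1 k a b : J k a -> J 1 b -> J k.+1 (a * b).
Proof.
move=> ha hb.
have [r hr] := J_approx k.+1 a; have [r' hr'] := J_approx k.+1 b.
have hk : J k (iota r).
  have := idealB (J_ideal k) ha (J_S hr); by rewrite opprB addrC subrK.
have h1 : J 1 (iota r').
  have := idealB (J_ideal 1) hb (J_mono (ltn0Sn k) hr'); by rewrite opprB addrC subrK.
move/J_iota: hk => hk; move/J1_iota: h1 => h1.
have hrr : J k.+1 (iota (r * r')).
  apply/J_iota; exists [:: (r, r')]; rewrite big_seq1; split => // ab.
  by rewrite inE => /eqP ->.
have -> : a * b = a * (b - iota r') + (a - iota r) * iota r' + iota (r * r').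
  by rewrite rmorphM; ring.
apply: idealD (J_ideal _) _ hrr; apply: idealD (J_ideal _) _ _.
  exact: idealMl (J_ideal _) hr'.
exact: idealMr (J_ideal _) hr.
Qed.

Lemma J1_prime a b : J 1 (a * b) -> J 1 a \/ J 1 b.
Proof.
move=> hab.
have [r hr] := J_approx 1 a; have [r' hr'] := J_approx 1 b.
have : J 1 (iota (r * r')).
  have -> : iota (r * r') = a * b - (a * (b - iota r') + (a - iota r) * iota r').
    by rewrite rmorphM; ring.
  apply: idealB (J_ideal _) hab _; apply: idealD (J_ideal _) _ _.
    exact: idealMl (J_ideal _) hr'.
  exact: idealMr (J_ideal _) hr.
move/J1_iota; case: Hp => _ [] _ Hpr /Hpr [] /J1_iota h; [left|right].
  by have := idealD (J_ideal 1) hr h; rewrite subrK.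
by have := idealD (J_ideal 1) hr' h; rewrite subrK.
Qed.

Lemma J1_n1 : ~ J 1 1.
Proof. by rewrite -(rmorph1 iota) => /J1_iota; case: Hp => _ []. Qed.

Lemma J_lim (s : nat -> S) : (forall k, J k (s k.+1 - s k)) ->
  exists L, forall k, J k (L - s k).
Proof.
move=> Hs.
have [r Hr] := boolp.choice (fun k => J_approx k (s k)).
have Hcr : forall n, ideal_pow p n (r n.+1 - r n).
  move=> n; apply/J_iota.
  have -> : iota (r n.+1 - r n) =
      (s n.+1 - s n) - (s n.+1 - iota (r n.+1)) + (s n - iota (r n)).
    by rewrite rmorphB; ring.
  apply: idealD (J_ideal _) _ (Hr n); apply: idealB (J_ideal _) (Hs n) _.
  exact: J_S.
have [L HL] := J_cauchy Hcr.
exists L => k.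
have -> : L - s k = (L - iota (r k)) - (s k - iota (r k)) by ring.
exact: idealB (J_ideal _) (HL k) (Hr k).
Qed.

Lemma J_pow x : J 1 x -> forall k, J k (x ^+ k).
Proof. by move=> hx; elim=> [|k IH]; [apply: J0 | rewrite exprSr; apply: J_mul1]. Qed.

Lemma J1_unit x : J 1 x -> (1 - x) \is a GRing.unit.
Proof.
move=> hx.
pose s k := \sum_(i < k) x ^+ i.
have Hs : forall k, J k (s k.+1 - s k).
  by move=> k; rewrite /s big_ord_recr /= addrC addrK; apply: J_pow.
have [L HL] := J_lim Hs.
apply/unitrPr; exists L; apply/eqP; rewrite -subr_eq0; apply/eqP; apply: J_sep => k.
have e : (1 - x) * s k = 1 - x ^+ k.
  by rewrite -opprB mulNr /s -subrX1 opprB.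
have -> : (1 - x) * L - 1 = (1 - x) * (L - s k) - x ^+ k.
  by rewrite mulrBr e; ring.
apply: idealB (J_ideal _) _ (J_pow hx k).
exact: idealMl (J_ideal _) (HL k).
Qed.

Lemma J1_unit_mod a y : J 1 (a * y - 1) -> a \is a GRing.unit.
Proof.
move=> h.
have : (a * y) \is a GRing.unit.
  have -> : a * y = 1 - (- (a * y - 1)) by ring.
  by apply: J1_unit; apply: idealN (J_ideal _) h.
by rewrite unitrM => /andP[].
Qed.

Lemma unit_notJ1 a : a \is a GRing.unit -> ~ J 1 a.
Proof.
move=> u ha; apply: J1_n1; rewrite -(mulrV u).
exact: idealMr (J_ideal _) ha.
Qed.

Lemma phat_J1 : phat iota p J = J 1.
Proof.
apply/funext=> s; apply/propext; split.
  move=> /(_ 1%N) [r [hr hs]].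
  by have := idealD (J_ideal 1) hs (proj2 (J1_iota r) hr); rewrite subrK.
move=> hs n; have [r hr] := J_approx n s.
case: n hr => [|n] hr.
  by exists 0; split; [case: Hp => [[]] | apply: J0].
exists r; split => //; apply/J1_iota.
have := idealB (J_ideal 1) hs (J_mono (ltn0Sn n) hr).
by rewrite opprB addrC subrK.
Qed.

Lemma ps_of_polyM (P Q : {poly S}) : ps_of_poly (P * Q) = ps_of_poly P * ps_of_poly Q.
Proof. by apply/funext=> n; rewrite /ps_of_poly coefM. Qed.

Definition ordJ (F : pser S) n := (forall i, (i < n)%N -> J 1 (F i)) /\ ~ J 1 (F n).

Lemma ord_mul F G a b : ordJ F a -> ordJ G b -> ordJ (F * G) (a + b).
Proof.
move=> [lF nF] [lG nG]; split; first exact: conv_low (J_ideal 1) lF lG.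
move=> h.
have H1 := @conv_single _ (J 1) F G (a + b) a (J_ideal 1) (leq_addr _ _).
rewrite addKn in H1.
have H2 : J 1 ((F * G) (a + b)%N - F a * G b).
  apply: H1 => j hj ja; case: (ltngtP j a) => [lt|gt|e]; last by [].
  - exact: idealMr (J_ideal _) (lF _ lt).
  - apply: idealMl (J_ideal _) (lG _ _); lia.
have : J 1 (F a * G b).
  by have := idealB (J_ideal 1) h H2; rewrite opprB addrC subrK.
by case/J1_prime.
Qed.

Lemma ord_uniq F a b : ordJ F a -> ordJ F b -> a = b.
Proof.
move=> [la na] [lb nb]; case: (ltngtP a b) => // h.
  by case: na; apply: lb.
by case: nb; apply: la.
Qed.

Lemma ord_exists F : (exists i, ~ J 1 (F i)) -> exists n, ordJ F n.
Proof.
move=> ex.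
have ex' : exists i, ~~ `[< J 1 (F i) >] by case: ex => i hi; exists i; apply/asboolP.
case: (ex_minnP ex') => m /asboolP hm Hmin; exists m; split => // i lt.
case: (boolp.pselect (J 1 (F i))) => // hi.
have := Hmin i (introN (asboolP _) hi); rewrite leqNgt lt //.
Qed.

Lemma ps_unit0 (U : pser S) : ps_unit U -> U 0%N \is a GRing.unit.
Proof.
case=> V e; apply/unitrPr; exists (V 0%N).
have := congr1 (fun h => h 0%N) e.
by rewrite /= -psmul0c.
Qed.

Lemma unit_ord0 (U : pser S) : U 0%N \is a GRing.unit -> ordJ U 0.
Proof. by move=> u; split => // ; apply: unit_notJ1. Qed.

Lemma monic_low_ord (P : {poly S}) : P \is monic ->
  (forall i, (i < (size P).-1)%N -> J 1 P`_i) -> ordJ (ps_of_poly P) (size P).-1.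
Proof.
move=> m l; split => //; rewrite /ps_of_poly -lead_coefE (monicP m); exact: J1_n1.
Qed.

Lemma wp_ord F P : is_wpoly (J 1) F P -> ordJ F (size P).-1.
Proof.
case=> m [l [U [u ->]]].
have := ord_mul (unit_ord0 (ps_unit0 u)) (monic_low_ord m l); by rewrite add0n.
Qed.

Definition psJ k (D : pser S) := forall i, J k (D i).

Lemma psJ_mull k (X D : pser S) : psJ k D -> psJ k (X * D).
Proof. by move=> h i; rewrite pscoefM; apply: ideal_sum (J_ideal k) _ => j _; apply: idealMl (J_ideal _) (h _). Qed.

Lemma psJ_mul1 k (A D : pser S) : psJ 1 A -> psJ k D -> psJ k.+1 (A * D).
Proof.
move=> hA hD i; rewrite pscoefM; apply: ideal_sum (J_ideal _) _ => j _.
by rewrite mulrC; apply: J_mul1.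
Qed.

Lemma psJ_sep (D : pser S) : (forall k, psJ k D) -> D = 0.
Proof. by move=> h; apply/funext=> i; apply: J_sep => k; apply: h. Qed.

Lemma wp_unique F P1 P2 : is_wpoly (J 1) F P1 -> is_wpoly (J 1) F P2 -> P1 = P2.
Proof.
move=> w1 w2; have o1 := wp_ord w1; have o2 := wp_ord w2.
have ed := ord_uniq o1 o2.
case: w1 => m1 [l1 [U1 [[V1 eV1] e1]]]; case: w2 => m2 [l2 [U2 [u2 e2]]].
change (U1 * V1 = 1) in eV1.
have s1 : (0 < size P1)%N by rewrite size_poly_gt0 monic_neq0.
have s2 : (0 < size P2)%N by rewrite size_poly_gt0 monic_neq0.
have es : size P1 = size P2 by rewrite -(prednK s1) -(prednK s2) ed.
set d := (size P2).-1 in ed o2 l2.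
have hP : forall m, (d <= m)%N -> P1`_m = P2`_m.
  move=> m; rewrite leq_eqVlt => /orP[/eqP <-|lt].
    by rewrite -[X in P1`_X]ed -lead_coefE (monicP m1) -[RHS]/(lead_coef P2) (monicP m2).
  rewrite !nth_default //; first by rewrite -(prednK s2).
  by rewrite es -(prednK s2).
set Q := V1 * U2 - 1.
have eQ : Q * ps_of_poly P2 = ps_of_poly P1 - ps_of_poly P2.
  have : ps_of_poly P1 = V1 * F.
    rewrite e1; change (ps_of_poly P1 = V1 * (U1 * ps_of_poly P1)).
    by rewrite mulrA (mulrC V1) eV1 mul1r.
  move=> ->; rewrite e2; change ((V1 * U2 - 1) * ps_of_poly P2 = V1 * (U2 * ps_of_poly P2) - ps_of_poly P2).
  by rewrite mulrBl mul1r mulrA.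
have HQ : forall k, psJ k Q.
  elim=> [|k IH] i; first exact: J0.
  have H := @conv_single _ (J k.+1) Q (ps_of_poly P2) (i + d) i (J_ideal _) (leq_addr _ _).
  rewrite addKn eQ psaddE psoppE /ps_of_poly hP ?leq_addl // subrr in H.
  have H' : J k.+1 (0 - Q i * P2`_d).
    apply: H => j hj ji; case: (ltngtP j i) => [lt|gt|e]; last by [].
      rewrite nth_default ?mulr0; first exact: ideal0 (J_ideal _).
      rewrite -(prednK s2) -/d; lia.
    apply: J_mul1 => //; apply: l2; lia.
  have := idealN (J_ideal _) H'.
  by rewrite sub0r opprK /d -lead_coefE (monicP m2) mulr1.
have Q0 := psJ_sep HQ.
apply/polyP => i.
have := congr1 (fun h => h i) eQ; rewrite Q0 mul0r ps0E psaddE psoppE.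
by move/eqP; rewrite eq_sym subr_eq0 => /eqP.
Qed.

Definition shiftn n (h : pser S) : pser S := fun i => h (i + n)%N.
Lemma shiftnB n (X Y : pser S) : shiftn n (X - Y) = shiftn n X - shiftn n Y.
Proof. by []. Qed.

Lemma diff_lem n (C A X Y : pser S) :
  C * (1 - shiftn n (A * X)) - C * (1 - shiftn n (A * Y)) = - (C * shiftn n (A * (X - Y))).
Proof. by rewrite (mulrBr A) shiftnB !mulrBr; ring. Qed.
Lemma diff_lem2 n (C A Q Y : pser S) :
  Q - C * (1 - shiftn n (A * Q)) = (Q - C * (1 - shiftn n (A * Y))) + C * shiftn n (A * (Q - Y)).
Proof. by rewrite (mulrBr A) shiftnB !mulrBr; ring. Qed.

Fixpoint witer (C A : pser S) (n k : nat) : pser S :=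
  if k is k'.+1 then C * (1 - shiftn n (A * witer C A n k')) else 0.

Lemma wp_exists F : distinguished (J 1) F -> exists P, is_wpoly (J 1) F P.
Proof.
case=> n [low [y hy]].
have un := J1_unit_mod hy.
pose A : pser S := fun i => if (i < n)%N then F i else 0.
pose B : pser S := fun i => F (i + n)%N.
have hFAB : F = A + B * xn n.
  apply/funext=> m; rewrite psaddE xnE /A /B; case: ltnP => h; first by rewrite addr0.
  by rewrite add0r subnK.
have [C hC] : exists C, B * C = 1 by apply: ps_inv; rewrite /B add0n.
have hA : psJ 1 A by move=> i; rewrite /A; case: ifP => h; [apply: low | exact: ideal0 (J_ideal _)].
pose Qs := witer C A n.
have Hd : forall k, psJ k (Qs k.+1 - Qs k).
  elim=> [|k IH] i; first exact: J0.
  have -> : Qs k.+2 - Qs k.+1 = - (C * shiftn n (A * (Qs k.+1 - Qs k))).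
    exact: diff_lem.
  apply: idealN (J_ideal _) _; apply: psJ_mull => j.
  exact: psJ_mul1.
have [Q HQ] : exists Q : pser S, forall i k, J k (Q i - Qs k i).
  have [Q0 HQ0] := boolp.choice (fun i => @J_lim (fun k => Qs k i) (fun k => Hd k i)).
  by exists Q0.
have eQ : Q = C * (1 - shiftn n (A * Q)).
  apply/eqP; rewrite -subr_eq0; apply/eqP; apply: psJ_sep => k.
  have -> : Q - C * (1 - shiftn n (A * Q)) =
      (Q - Qs k.+1) + C * shiftn n (A * (Q - Qs k)).
    exact: diff_lem2.
  move=> i; rewrite psaddE; apply: idealD (J_ideal _) _ _.
    exact: J_S (HQ i k.+1).
  apply: J_S; apply: psJ_mull => j; apply: psJ_mul1 => // l; exact: HQ.
have eBQ : B * Q = 1 - shiftn n (A * Q) by rewrite {1}eQ mulrA hC mul1r.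
have eFQ : F * Q = A * Q + (1 - shiftn n (A * Q)) * xn n.
  by rewrite -eBQ {1}hFAB mulrDl; congr (_ + _); rewrite mulrC mulrA (mulrC Q).
have hAQ : psJ 1 (A * Q) by apply: psJ_mul1 => // i; exact: J0.
have hlo : forall m, (m < n)%N -> J 1 ((F * Q) m).
  by move=> m h; rewrite eFQ psaddE xnE h addr0.
have hhi : forall m, (n <= m)%N -> (F * Q) m = (m == n)%:R.
  move=> m h; rewrite eFQ psaddE xnE ltnNge h /= psaddE psoppE ps1coef /shiftn subnK //.
  by rewrite subn_eq0 eqn_leq h andbT addrC subrK.
pose P := \poly_(i < n.+1) (F * Q) i.
have sP : size P = n.+1 by rewrite size_poly_eq // hhi // eqxx oner_eq0.
have mP : P \is monic.
  by rewrite monicE lead_coefE sP coef_poly ltnSn hhi // eqxx.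
have eP : ps_of_poly P = F * Q.
  apply/funext=> i; rewrite /ps_of_poly coef_poly; case: ltnP => // h.
  rewrite hhi; last exact: ltnW.
  by rewrite eqn_leq leqNgt h.
have uQ : Q 0%N \is a GRing.unit.
  rewrite eQ psmul0c psaddE psoppE ps1coef /= /shiftn add0n unitrM; apply/andP; split.
    apply/unitrPr; exists (B 0%N); have := congr1 (fun h => h 0%N) hC.
    by rewrite /= psmul0c mulrC.
  by apply: J1_unit; apply: hAQ.
have [Q' hQ'] := ps_inv uQ.
exists P; split => //; split.
  by move=> i; rewrite sP /= => h; rewrite coef_poly ltnS ltnW //; apply: hlo.
exists Q'; split; first by exists Q; change (Q' * Q = 1); rewrite mulrC.
change (F = Q' * ps_of_poly P); by rewrite eP mulrCA (mulrC Q') hQ' mulr1.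
Qed.

Lemma WP_spec F : distinguished (J 1) F -> is_wpoly (J 1) F (WP (J 1) F).
Proof. by move=> d; rewrite /WP; apply: epsilon_spec; apply: wp_exists. Qed.

Lemma WP_eq F P : is_wpoly (J 1) F P -> WP (J 1) F = P.
Proof.
move=> w; apply: (wp_unique _ w); rewrite /WP; apply: epsilon_spec; by exists P.
Qed.

Lemma wp_dist F P : is_wpoly (J 1) F P -> distinguished (J 1) F.
Proof.
move=> w; have [lo nJ] := wp_ord w.
case: w => m [l [U [u e]]]; change (F = U * ps_of_poly P) in e.
exists (size P).-1; split => //.
have u0 := ps_unit0 u.
exists (U 0%N)^-1.
set d := (size P).-1 in lo nJ l *.
have H := @conv_single _ (J 1) U (ps_of_poly P) d 0 (J_ideal _) (leq0n _).
have H' : J 1 ((U * ps_of_poly P) d - U 0%N * (ps_of_poly P) d).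
  rewrite subn0 in H; apply: H => j hj j0; apply: idealMl (J_ideal _) _.
  rewrite /ps_of_poly; apply: l; lia.
rewrite -e /ps_of_poly -lead_coefE (monicP m) mulr1 /= in H'.
have -> : F d * (U 0%N)^-1 - 1 = (F d - U 0%N) * (U 0%N)^-1.
  by rewrite mulrBl mulrV.
exact: idealMr (J_ideal _) H'.
Qed.

Lemma psS_domain (a b : pser S) : a * b = 0 -> a = 0 \/ b = 0.
Proof.
move=> e; case: (boolp.pselect (a = 0)) => [->|na]; first by left.
case: (boolp.pselect (b = 0)) => [->|nb]; first by right.
exfalso.
have ea : exists i, a i != 0.
  apply: boolp.contrapT => H; apply: na; apply/funext=> i; apply/eqP.
  by apply: boolp.contrapT => H'; apply: H; exists i; apply/negP.
have eb : exists i, b i != 0.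
  apply: boolp.contrapT => H; apply: nb; apply/funext=> i; apply/eqP.
  by apply: boolp.contrapT => H'; apply: H; exists i; apply/negP.
case: (ex_minnP ea) => i ai Hi; case: (ex_minnP eb) => j bj Hj.
have H := @conv_single _ (fun x : S => x = 0) a b (i + j) i (@ideal_eq0 S) (leq_addr _ _).
rewrite addKn e ps0E sub0r in H.
have : a i * b j = 0.
  apply: oppr_inj; rewrite oppr0; apply: H => l hl li.
  case: (ltngtP l i) => [lt|gt|//].
    have : a l == 0 by apply: boolp.contrapT => /negP h; have := Hi _ h; rewrite leqNgt lt.
    by move/eqP ->; rewrite mul0r.
  have : b (i + j - l)%N == 0.
    apply: boolp.contrapT => /negP h; have := Hj _ h; lia.
  by move/eqP ->; rewrite mulr0.
by move/eqP; rewrite mulf_eq0 (negbTE ai) (negbTE bj).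
Qed.

Lemma psS_cancel (G X Y : pser S) : G != 0 -> G * X = G * Y -> X = Y.
Proof.
move=> nG e; have : G * (X - Y) = 0 by rewrite mulrBr e subrr.
case/psS_domain => [h|/eqP]; first by rewrite h eqxx in nG.
by rewrite subr_eq0 => /eqP.
Qed.

Lemma decomp (f : pser R) :
  (forall s : S, exists r : R, exists c : S, s - iota r = iota (f 0%N) * c) ->
  forall (s : pser S) r0 c0, s 0%N = iota r0 + iota (f 0%N) * c0 ->
  exists (r : pser R) (c : pser S), r 0%N = r0 /\ c 0%N = c0 /\
    s = ps_map iota r + ps_map iota f * c.
Proof.
move=> Hs s r0 c0 e0.
have Hs' : forall t, exists rc : R * S, t - iota rc.1 = iota (f 0%N) * rc.2.
  by move=> t; have [r [c h]] := Hs t; exists (r, c).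
have [phi Hphi] := boolp.choice Hs'.
pose step k (cs : seq S) : R * S := if k is k'.+1 then
   phi (s k - \sum_(i < k) iota (f i.+1) * nth 0 cs (k - i.+1)) else (r0, c0).
pose st k cs := (step k cs).2.
pose c : pser S := fun k => st k (build st k).
pose r : pser R := fun k => (step k (build st k)).1.
have hc : forall k j, (j < k)%N -> nth 0 (build st k) j = c j.
  by move=> k j h; rewrite nth_build.
exists r, c; split => //; split => //.
apply/funext=> k; rewrite psaddE pscoefM big_ord_recl /= subn0.
case: k => [|k].
  by rewrite big_ord0 addr0 /r /c /st /step /= e0.
set t := s k.+1 - \sum_(i < k.+1) iota (f i.+1) * nth 0 (build st k.+1) (k.+1 - i.+1).
have Ht := Hphi t.
have -> : \sum_(i < k.+1) ps_map iota f (bump 0 i) * c (k.+1 - bump 0 i)%N =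
    \sum_(i < k.+1) iota (f i.+1) * nth 0 (build st k.+1) (k.+1 - i.+1).
  apply: eq_bigr => i _; rewrite /ps_map /bump leq0n add1n hc //.
  rewrite subSS; lia.
have e1 : ps_map iota r k.+1 = iota (phi t).1 by [].
have e2 : c k.+1 = (phi t).2 by [].
rewrite e1 e2 /ps_map -Ht /t; ring.
Qed.

Lemma inter (f : pser R) : injective iota -> f 0%N != 0 ->
  (forall r : R, (exists c : S, iota r = iota (f 0%N) * c) -> exists c : R, r = f 0%N * c) ->
  forall (c : pser S) (a : pser R), ps_map iota f * c = ps_map iota a ->
  exists d : pser R, c = ps_map iota d.
Proof.
move=> Hi nf Hinj c a e.
have nf' : iota (f 0%N) != 0.
  by apply/eqP => h; move/eqP: nf; apply; apply: Hi; rewrite h rmorph0.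
have H : forall k, exists d, c k = iota d.
  elim/ltn_ind => k IH.
  have IH' : forall j, exists d, (j < k)%N -> c j = iota d.
    move=> j; case: (ltnP j k) => h; last by exists 0.
    by have [d hd] := IH j h; exists d.
  have [dd Hdd] := boolp.choice IH'.
  have ek := congr1 (fun h => h k) e; rewrite /= pscoefM big_ord_recl /= subn0 in ek.
  set T := \sum_(i < k) f (bump 0 i) * dd (k - bump 0 i)%N.
  have eT : \sum_(i < k) ps_map iota f (bump 0 i) * c (k - bump 0 i)%N = iota T.
    rewrite rmorph_sum; apply: eq_bigr => i _; rewrite rmorphM Hdd //.
    rewrite /bump leq0n add1n; have := ltn_ord i; lia.
  rewrite eT /ps_map in ek.
  have [d hd] : exists d, a k - T = f 0%N * d.
    by apply: Hinj; exists (c k); rewrite rmorphB -ek addrK.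
  exists d; apply/eqP; rewrite -subr_eq0; apply/eqP.
  have : iota (f 0%N) * (c k - iota d) = 0.
    by rewrite mulrBr -rmorphM -hd rmorphB -ek addrK subrr.
  by move/eqP; rewrite mulf_eq0 (negbTE nf') => /eqP.
have [d hd] := boolp.choice H.
by exists d; apply/funext => k; rewrite hd.
Qed.

Lemma ord_conv (F G : pser S) a b : (forall i, (i < a)%N -> J 1 (F i)) ->
  (forall i, (i < b)%N -> J 1 (G i)) -> J 1 ((F * G) (a + b)%N - F a * G b).
Proof.
move=> lF lG.
have H1 := @conv_single _ (J 1) F G (a + b) a (J_ideal 1) (leq_addr _ _).
rewrite addKn in H1; apply: H1 => j hj ja; case: (ltngtP j a) => [lt|gt|e]; last by [].
- exact: idealMr (J_ideal _) (lF _ lt).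
- apply: idealMl (J_ideal _) (lG _ _); lia.
Qed.

Lemma ps_unit_map (g : pser R) : ps_unit g -> ps_unit (ps_map iota g).
Proof.
case=> g' e; exists (ps_map iota g'); change (ps_map iota g * ps_map iota g' = 1).
by rewrite -ps_mapM; change (ps_map iota (ps_mul g g') = 1); rewrite e ps_map1.
Qed.

Lemma ps_unit_of0 (g : pser R) : g 0%N \is a GRing.unit -> ps_unit g.
Proof. by move=> u; have [g' e] := ps_inv u; exists g'. Qed.

Lemma ps_unit_of0S (g : pser S) : g 0%N \is a GRing.unit -> ps_unit g.
Proof. by move=> u; have [g' e] := ps_inv u; exists g'. Qed.

Lemma unit_descend (f : pser R) : injective iota ->
  (forall r : R, (exists c : S, iota r = iota (f 0%N) * c) -> exists c : R, r = f 0%N * c) ->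
  (forall s : S, exists r : R, exists c : S, s - iota r = iota (f 0%N) * c) ->
  forall r, (exists t, f 0%N = r * t) -> iota r \is a GRing.unit -> r \is a GRing.unit.
Proof.
move=> Hi Hinj Hs r [t ht] u.
case: (eqVneq (f 0%N) 0) => [f0|nf].
  have [r' [c e]] := Hs (iota r)^-1.
  rewrite f0 rmorph0 mul0r in e; move/eqP: e; rewrite subr_eq0 => /eqP e.
  apply/unitrPr; exists r'; apply: Hi; by rewrite rmorphM -e mulrV // rmorph1.
have [c hc] : exists c, t = f 0%N * c.
  apply: Hinj; exists (iota r)^-1; by rewrite ht rmorphM mulrAC mulrV // mul1r.
apply/unitrPr; exists c.
have : f 0%N * (1 - r * c) = 0 by rewrite mulrBr mulr1 {1}ht hc; ring.
by move/eqP; rewrite mulf_eq0 (negbTE nf) /= subr_eq0 => /eqP <-.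
Qed.

Lemma WP_mul (A B : pser S) : distinguished (J 1) A -> distinguished (J 1) B ->
  WP (J 1) (A * B) = WP (J 1) A * WP (J 1) B.
Proof.
move=> dA dB; have wA := WP_spec dA; have wB := WP_spec dB.
apply: WP_eq.
case: (wA) => mA [lA [UA [[VA eVA] eA]]]; case: (wB) => mB [lB [UB [[VB eVB] eB]]].
change (UA * VA = 1) in eVA; change (UB * VB = 1) in eVB.
change (A = UA * ps_of_poly (WP (J 1) A)) in eA.
change (B = UB * ps_of_poly (WP (J 1) B)) in eB.
have nA := monic_neq0 mA; have nB := monic_neq0 mB.
have sA : (0 < size (WP (J 1) A))%N by rewrite size_poly_gt0.
have sB : (0 < size (WP (J 1) B))%N by rewrite size_poly_gt0.
split; first by rewrite monicMl.
split.
  move=> i; rewrite size_mul // => hi; rewrite -/(ps_of_poly _ i) ps_of_polyM.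
  apply: (conv_low (J_ideal 1) lA lB).
  by rewrite -(prednK sA) -(prednK sB) addSn addnS /= in hi.
exists (UA * UB); split.
  exists (VA * VB); change (UA * UB * (VA * VB) = 1).
  by rewrite mulrACA eVA eVB mulr1.
change (A * B = UA * UB * ps_of_poly (WP (J 1) A * WP (J 1) B)).
by rewrite ps_of_polyM {1}eA {1}eB; ring.
Qed.

Lemma not_all_J1 (X Y : pser S) n : ~ J 1 ((X * Y) n) -> exists i, ~ J 1 (X i).
Proof.
move=> h; apply: boolp.contrapT => H; apply: h.
have : psJ 1 X by move=> i; apply: boolp.contrapT => Hi; apply: H; exists i.
by move=> hX; rewrite mulrC; apply: psJ_mull.
Qed.

Lemma p1_side (f g h : pser R) : injective iota ->
  (forall r : R, (exists c : S, iota r = iota (f 0%N) * c) -> exists c : R, r = f 0%N * c) ->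
  (forall s : S, exists r : R, exists c : S, s - iota r = iota (f 0%N) * c) ->
  distinguished (J 1) (ps_map iota f) -> ~ ps_unit g -> f = g * h ->
  distinguished (J 1) (ps_map iota g) /\ WP (J 1) (ps_map iota g) \isn't a GRing.unit.
Proof.
move=> Hi Hinj Hs [n [low [y hy]]] ng efg.
have un := J1_unit_mod hy.
have eF : ps_map iota f = ps_map iota g * ps_map iota h by rewrite efg ps_mapM.
have nFn : ~ J 1 (ps_map iota f n) by apply: unit_notJ1.
have oF : ordJ (ps_map iota f) n by [].
have [i oi] : exists i, ordJ (ps_map iota g) i.
  by apply: ord_exists; apply: (@not_all_J1 _ (ps_map iota h) n); rewrite -eF.
have [j oj] : exists j, ordJ (ps_map iota h) j.
  apply: ord_exists; apply: (@not_all_J1 _ (ps_map iota g) n); rewrite mulrC -eF //.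
have o2 := ord_mul oi oj; rewrite -eF in o2.
have enij := ord_uniq oF o2.
have hc := ord_conv oi.1 oj.1; rewrite -eF -enij in hc.
have y'P : J 1 (ps_map iota g i * (ps_map iota h j * y) - 1).
  have -> : ps_map iota g i * (ps_map iota h j * y) - 1 =
     (ps_map iota f n * y - 1) - (ps_map iota f n - ps_map iota g i * ps_map iota h j) * y by ring.
  apply: idealB (J_ideal _) hy _; exact: idealMr (J_ideal _) hc.
have dg : distinguished (J 1) (ps_map iota g).
  by exists i; split; [case: oi | exists (ps_map iota h j * y)].
split => //; apply/negP => u.
have w := WP_spec dg; have ow := wp_ord w.
move: u; rewrite poly_unitE => /andP[/eqP s1 _]; rewrite s1 in ow.
have i0 := ord_uniq oi ow; rewrite i0 in y'P.
have ug := J1_unit_mod y'P.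
apply: ng; apply: ps_unit_of0; apply: (@unit_descend f) => //.
by exists (h 0%N); rewrite efg psmul0c.
Qed.

Lemma part1 (f g h : pser R) : injective iota ->
  (forall r : R, (exists c : S, iota r = iota (f 0%N) * c) -> exists c : R, r = f 0%N * c) ->
  (forall s : S, exists r : R, exists c : S, s - iota r = iota (f 0%N) * c) ->
  distinguished (J 1) (ps_map iota f) -> ~ ps_unit g -> ~ ps_unit h -> f = ps_mul g h ->
     distinguished (J 1) (ps_map iota g) /\
     distinguished (J 1) (ps_map iota h) /\
     WP (J 1) (ps_map iota f) =
       WP (J 1) (ps_map iota g) * WP (J 1) (ps_map iota h) /\
     WP (J 1) (ps_map iota g) \isn't a GRing.unit /\
     WP (J 1) (ps_map iota h) \isn't a GRing.unit.
Proof.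
move=> Hi Hinj Hs Hd ng nh e.
have [dg ug] := p1_side Hi Hinj Hs Hd ng e.
have [dh uh] := p1_side (g := h) (h := g) Hi Hinj Hs Hd nh (etrans e (mulrC g h)).
do !split => //.
have -> : ps_map iota f = ps_map iota g * ps_map iota h by rewrite e -ps_mapM.
exact: WP_mul.
Qed.

Lemma monic_ps_neq0 (G : {poly S}) : G \is monic -> ps_of_poly G != 0.
Proof.
move=> m; apply/eqP => /(congr1 (fun X : pser S => X (size G).-1)).
rewrite /ps_of_poly -lead_coefE (monicP m) ps0E; apply/eqP; exact: oner_neq0.
Qed.

Lemma p2_finish (f g h : pser R) (G1 H1 : {poly S}) (U W : pser S) : injective iota ->
  G1 \is monic -> H1 \is monic ->
  (forall i, (i < (size G1).-1)%N -> J 1 G1`_i) ->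
  (forall i, (i < (size H1).-1)%N -> J 1 H1`_i) ->
  (1 < size G1)%N -> (1 < size H1)%N ->
  ps_unit U -> ps_map iota f = U * (ps_of_poly G1 * ps_of_poly H1) ->
  f = g * h -> ps_unit W -> ps_map iota g = W * ps_of_poly G1 ->
  ~ ps_unit g /\ ~ ps_unit h /\ distinguished (J 1) (ps_map iota g) /\
  distinguished (J 1) (ps_map iota h) /\ WP (J 1) (ps_map iota g) = G1 /\
  WP (J 1) (ps_map iota h) = H1.
Proof.
move=> Hi mG mH lG lH sG sH [V eV] eF efg [Wi eW] eg.
change (U * V = 1) in eV; change (W * Wi = 1) in eW.
set G1s := ps_of_poly G1 in eF eg *; set H1s := ps_of_poly H1 in eF *.
have nG : G1s != 0 by apply: monic_ps_neq0.
have eh : ps_map iota h = Wi * U * H1s.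
  apply: (psS_cancel nG).
  have e1 : ps_map iota f = W * (G1s * ps_map iota h).
    by rewrite efg ps_mapM eg mulrA.
  have e2 : Wi * ps_map iota f = G1s * ps_map iota h.
    by rewrite e1 mulrA (mulrC Wi) eW mul1r.
  rewrite -e2 eF; rewrite mulrA mulrA; ring.
have wg : is_wpoly (J 1) (ps_map iota g) G1.
  by split => //; split => //; exists W; split => //; exists Wi.
have wh : is_wpoly (J 1) (ps_map iota h) H1.
  split => //; split => //; exists (Wi * U); split => //.
  exists (W * V); change (Wi * U * (W * V) = 1).
  by rewrite mulrACA (mulrC Wi) eW eV mulr1.
have nu : forall (k : pser R) (P : {poly S}), is_wpoly (J 1) (ps_map iota k) P ->
    (1 < size P)%N -> ~ ps_unit k.
  move=> k P w sP uk.
  have o0 := unit_ord0 (ps_unit0 (ps_unit_map uk)).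
  have := ord_uniq o0 (wp_ord w); move: sP; case: (size P) => [|[|s]] //.
do !split.
- exact: nu wg sG.
- exact: nu wh sH.
- exact: wp_dist wg.
- exact: wp_dist wh.
- exact: WP_eq.
- exact: WP_eq.
Qed.

Lemma part2 (f : pser R) : injective iota ->
  distinguished (J 1) (ps_map iota f) ->
  (forall r : R, (exists c : S, iota r = iota (f 0%N) * c) -> exists c : R, r = f 0%N * c) ->
  (forall s : S, exists r : R, exists c : S, s - iota r = iota (f 0%N) * c) ->
  (forall d : S, (exists c : S, iota (f 0%N) = d * c) ->
     exists e : R, (exists c : R, f 0%N = e * c) /\
       exists v : S, v \is a GRing.unit /\ d = v * iota e) ->
  forall G H : {poly S}, WP (J 1) (ps_map iota f) = G * H ->
     G \isn't a GRing.unit -> H \isn't a GRing.unit ->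
     exists g h : pser R, ~ ps_unit g /\ ~ ps_unit h /\ f = ps_mul g h /\
       distinguished (J 1) (ps_map iota g) /\
       distinguished (J 1) (ps_map iota h) /\
       exists! u : S, u \is a GRing.unit /\
         G = u *: WP (J 1) (ps_map iota g) /\
         H = u^-1 *: WP (J 1) (ps_map iota h).
Proof.
move=> Hi Hd Hinj Hs Hdiv G H eP nGu nHu.
have w := WP_spec Hd; set P := WP (J 1) (ps_map iota f) in w eP.
case: w => mP [lP [U [uU eF]]]; change (ps_map iota f = U * ps_of_poly P) in eF.
have nP := monic_neq0 mP.
have nG : G != 0 by apply/eqP => h0; rewrite h0 mul0r in eP; rewrite eP eqxx in nP.
have nH : H != 0 by apply/eqP => h0; rewrite h0 mulr0 in eP; rewrite eP eqxx in nP.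
have elc : lead_coef G * lead_coef H = 1 by rewrite -lead_coefM -eP (monicP mP).
have ulG : lead_coef G \is a GRing.unit by apply/unitrPr; exists (lead_coef H).
have ulH : lead_coef H \is a GRing.unit by apply/unitrPr; exists (lead_coef G); rewrite mulrC.
have size2 : forall Q : {poly S}, Q != 0 -> Q \isn't a GRing.unit ->
    lead_coef Q \is a GRing.unit -> (1 < size Q)%N.
  move=> Q nQ nQu uQ; move: nQ; rewrite -size_poly_eq0.
  case e: (size Q) => [|[|s]] // _.
  move: nQu; rewrite poly_unitE e /=; move: uQ; rewrite lead_coefE e /= => -> //.
have sG := size2 G nG nGu ulG; have sH := size2 H nH nHu ulH.
set dG := (size G).-1; set dH := (size H).-1.
have sP : (size P).-1 = dG + dH.
  rewrite eP size_mul // /dG /dH; move: sG sH; case: (size G) => // a; case: (size H) => // b.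
  by move=> _ _; rewrite addSn addnS.
have ordlc : forall Q : {poly S}, lead_coef Q \is a GRing.unit ->
    exists i, ordJ (ps_of_poly Q) i /\ (i <= (size Q).-1)%N.
  move=> Q uQ.
  have nJ : ~ J 1 (ps_of_poly Q (size Q).-1) by apply: unit_notJ1.
  have [i oi] := @ord_exists (ps_of_poly Q) (ex_intro (fun k => ~ J 1 (ps_of_poly Q k)) _ nJ).
  exists i; split => //; rewrite leqNgt; apply/negP => lt.
  by apply: nJ; apply: oi.1.
have [iG [oG leG]] := ordlc G ulG; have [iH [oH leH]] := ordlc H ulH.
have oP := monic_low_ord mP lP.
have oGH := ord_mul oG oH; rewrite -ps_of_polyM -eP in oGH.
have eo := ord_uniq oP oGH; rewrite sP in eo.
have eiG : iG = dG by lia.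
have eiH : iH = dH by lia.
rewrite eiG in oG; rewrite eiH in oH.
set c := lead_coef G.
have nc : c != 0 by apply/eqP => h0; move: ulG; rewrite -/c h0 unitr0.
have nci : c^-1 != 0 by rewrite invr_neq0.
set G1 := c^-1 *: G; set H1 := c *: H.
have sG1 : size G1 = size G by rewrite size_scale.
have sH1 : size H1 = size H by rewrite size_scale.
have mG1 : G1 \is monic by rewrite monicE lead_coefZ mulVr.
have mH1 : H1 \is monic by rewrite monicE lead_coefZ elc.
have lG1 : forall i, (i < (size G1).-1)%N -> J 1 G1`_i.
  by move=> i; rewrite sG1 coefZ => h; apply: idealMl (J_ideal _) (oG.1 _ h).
have lH1 : forall i, (i < (size H1).-1)%N -> J 1 H1`_i.
  by move=> i; rewrite sH1 coefZ => h; apply: idealMl (J_ideal _) (oH.1 _ h).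
have eGH : P = G1 * H1.
  by rewrite eP /G1 /H1 -scalerAl -scalerAr scalerA mulVr // scale1r.
have eG : G = c *: G1 by rewrite /G1 scalerA mulrV // scale1r.
have eH : H = c^-1 *: H1 by rewrite /H1 scalerA mulVr // scale1r.
have eF' : ps_map iota f = U * (ps_of_poly G1 * ps_of_poly H1) by rewrite eF eGH ps_of_polyM.
have sG1' : (1 < size G1)%N by rewrite sG1.
have sH1' : (1 < size H1)%N by rewrite sH1.
have [g [h [W [efg [uW eg]]]]] : exists g h W, f = g * h /\ ps_unit W /\
    ps_map iota g = W * ps_of_poly G1.
  case: (eqVneq (f 0%N) 0) => [f0|nf].
    have pre1 : forall x : S, exists r, x = iota r.
      move=> x; have [r [c0 e0]] := Hs x; exists r.
      by move/eqP: e0; rewrite f0 rmorph0 mul0r subr_eq0 => /eqP.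
    have pre : forall X : pser S, exists x : pser R, X = ps_map iota x.
      by move=> X; have [x hx] := boolp.choice (fun i => pre1 (X i)); exists x; apply/funext.
    have [g eg] := pre (ps_of_poly G1); have [h eh] := pre (U * ps_of_poly H1).
    exists g, h, 1; split; last split.
    - apply: (ps_map_inj Hi); rewrite ps_mapM -eg -eh eF'; ring.
    - by exists 1; change ((1 : pser S) * 1 = 1); rewrite mulr1.
    - by rewrite -eg mul1r.
  have e0 : iota (f 0%N) = G1`_0 * (U 0%N * H1`_0).
    have := congr1 (fun X : pser S => X 0%N) eF'; rewrite /= !psmul0c /ps_map /ps_of_poly => ->.
    ring.
  have [e' [[c' hc'] [v [uv hv]]]] := Hdiv (G1`_0) (ex_intro _ _ e0).
  pose w := psC v^-1; pose s := ps_of_poly G1 * w.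
  have s0 : s 0%N = iota e' + iota (f 0%N) * 0.
    rewrite /s psmul0c /w /psC /= /ps_of_poly hv mulr0 addr0 mulrAC mulrV // mul1r //.
  have [g [cc [g0 [cc0 es]]]] := decomp Hs s0.
  pose W := w - U * ps_of_poly H1 * cc.
  have eg : ps_map iota g = W * ps_of_poly G1.
    have : ps_map iota g = s - ps_map iota f * cc by rewrite es addrK.
    by move=> ->; rewrite eF' /W /s; ring.
  have W0 : W 0%N = v^-1.
    by rewrite /W psaddE psoppE psmul0c cc0 mulr0 subr0 /w /psC.
  have uW0 : W 0%N \is a GRing.unit by rewrite W0 unitrV.
  have [Wi eWi] := ps_inv uW0.
  pose K := Wi * U * ps_of_poly H1.
  have eK : ps_map iota f = ps_map iota g * K.
    have e1 : U * (ps_of_poly G1 * ps_of_poly H1) = (W * Wi) * (U * (ps_of_poly G1 * ps_of_poly H1)).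
      by rewrite eWi mul1r.
    rewrite eF' e1 eg /K; ring.
  have ne' : iota e' != 0.
    apply/eqP => h0; move/eqP: nf; apply; apply: Hi.
    by rewrite hc' rmorphM h0 mul0r rmorph0.
  have K0 : K 0%N = iota c' + iota (f 0%N) * 0.
    rewrite mulr0 addr0.
    have := congr1 (fun X : pser S => X 0%N) eK; rewrite /= psmul0c /ps_map g0 hc' rmorphM.
    by move/(mulfI ne').
  have [a [c2 [a0 [c20 eKd]]]] := decomp Hs K0.
  have e3 : ps_map iota f * (1 - ps_map iota g * c2) = ps_map iota (g * a).
    rewrite ps_mapM mulrBr mulr1 {1}eK eKd; ring.
  have [z ez] := inter Hi nf Hinj e3.
  have z0 : z 0%N = 1.
    apply: Hi; have := congr1 (fun X : pser S => X 0%N) ez.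
    by rewrite /= psaddE psoppE psmul0c c20 mulr0 subr0 ps1coef /ps_map rmorph1 => <-.
  have [zi ezi] := @ps_inv _ z (eq_ind_r (fun x => x \is a GRing.unit) (unitr1 _) z0).
  have efz : f * z = g * a.
    by apply: (ps_map_inj Hi); rewrite ps_mapM -ez e3.
  exists g, (a * zi), W; split; last split.
  - by rewrite mulrA -efz -mulrA ezi mulr1.
  - by exists Wi.
  - exact: eg.
have [ng [nh [dg [dh [wg wh]]]]] :=
  p2_finish Hi mG1 mH1 lG1 lH1 sG1' sH1' uU eF' efg uW eg.
exists g, h; do !split => //.
exists c; split.
  by split; [apply/unitrPr; exists (lead_coef H) | rewrite wg wh].
move=> u' [_ [e' _]]; have := congr1 lead_coef e'.
by rewrite lead_coefZ wg (monicP mG1) mulr1.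
Qed.

Lemma irr_iff (f : pser R) : injective iota ->
  distinguished (J 1) (ps_map iota f) ->
  (forall r : R, (exists c : S, iota r = iota (f 0%N) * c) -> exists c : R, r = f 0%N * c) ->
  (forall s : S, exists r : R, exists c : S, s - iota r = iota (f 0%N) * c) ->
  (forall d : S, (exists c : S, iota (f 0%N) = d * c) ->
     exists e : R, (exists c : R, f 0%N = e * c) /\
       exists v : S, v \is a GRing.unit /\ d = v * iota e) ->
  (ps_irreducible f <-> poly_irreducible (WP (J 1) (ps_map iota f))).
Proof.
move=> Hi Hd Hinj Hs Hdiv.
have w := WP_spec Hd; have ow := wp_ord w.
have [n [low [y hy]]] := Hd.
have un := J1_unit_mod hy.
have on : ordJ (ps_map iota f) n by split => //; apply: unit_notJ1.
have en := ord_uniq on ow.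
case: (w) => mP _.
have sP : (0 < size (WP (J 1) (ps_map iota f)))%N by rewrite size_poly_gt0 monic_neq0.
split.
  case=> nf0 [nfu Hirr]; split; first exact: monic_neq0.
  split.
    apply/negP; rewrite poly_unitE => /andP[/eqP s1 _].
    rewrite s1 in en; rewrite en in un.
    apply: nfu; apply: ps_unit_of0; apply: (@unit_descend f) => //.
    by exists 1; rewrite mulr1.
  move=> G H e.
  case uG: (G \is a GRing.unit); first by left.
  case uH: (H \is a GRing.unit); first by right.
  have [g [h [ng [nh [efg _]]]]] := part2 Hi Hd Hinj Hs Hdiv e (negbT uG) (negbT uH).
  by case: (Hirr g h efg).
case=> nP [nPu Pirr]; split.
  move=> f0; move: un; rewrite f0 /ps_map rmorph0 unitr0 //.
split.
  move=> uf; have o0 := unit_ord0 (ps_unit0 (ps_unit_map uf)).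
  have e0 := ord_uniq o0 ow.
  move/negP: nPu; apply; rewrite poly_unitE.
  have s1 : size (WP (J 1) (ps_map iota f)) = 1%N by rewrite -(prednK sP) -e0.
  rewrite s1 eqxx /=.
  have := monicP mP; rewrite lead_coefE s1 /= => ->; exact: unitr1.
move=> g h e.
case: (boolp.pselect (ps_unit g)) => [|ng]; first by left.
case: (boolp.pselect (ps_unit h)) => [|nh]; first by right.
have [_ [_ [eW [ug uh]]]] := part1 Hi Hinj Hs Hd ng nh e.
by case: (Pirr _ _ eW) => u; [move/negP: ug | move/negP: uh].
Qed.
End Compl.

Theorem theorem7p1 (R S : idomainType) (iota : {rmorphism R -> S})
    (p : R -> Prop) (J : nat -> S -> Prop) (f : pser R) :
  prime_ideal p ->
  is_padic_completion iota p J ->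
  injective iota ->
  distinguished (phat iota p J) (ps_map iota f) ->
  (* R/f0R -> Rhat/f0Rhat (the only possible R-algebra map) is bijective *)
  (forall r : R, (exists c : S, iota r = iota (f 0%N) * c) ->
     exists c : R, r = f 0%N * c) ->
  (forall s : S, exists r : R, exists c : S, s - iota r = iota (f 0%N) * c) ->
  (* divisors of f0 in Rhat are associate to divisors of f0 in R *)
  (forall d : S, (exists c : S, iota (f 0%N) = d * c) ->
     exists e : R, (exists c : R, f 0%N = e * c) /\
       exists v : S, v \is a GRing.unit /\ d = v * iota e) ->
  (ps_irreducible f <->
     poly_irreducible (WP (phat iota p J) (ps_map iota f)))
  /\
  (forall g h : pser R, ~ ps_unit g -> ~ ps_unit h -> f = ps_mul g h ->
     distinguished (phat iota p J) (ps_map iota g) /\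
     distinguished (phat iota p J) (ps_map iota h) /\
     WP (phat iota p J) (ps_map iota f) =
       WP (phat iota p J) (ps_map iota g) * WP (phat iota p J) (ps_map iota h) /\
     WP (phat iota p J) (ps_map iota g) \isn't a GRing.unit /\
     WP (phat iota p J) (ps_map iota h) \isn't a GRing.unit)
  /\
  (forall G H : {poly S}, WP (phat iota p J) (ps_map iota f) = G * H ->
     G \isn't a GRing.unit -> H \isn't a GRing.unit ->
     exists g h : pser R, ~ ps_unit g /\ ~ ps_unit h /\ f = ps_mul g h /\
       distinguished (phat iota p J) (ps_map iota g) /\
       distinguished (phat iota p J) (ps_map iota h) /\
       exists! u : S, u \is a GRing.unit /\
         G = u *: WP (phat iota p J) (ps_map iota g) /\
         H = u^-1 *: WP (phat iota p J) (ps_map iota h)).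
Proof.
move=> Hp Hc Hi Hd Hinj Hs Hdiv.
rewrite (phat_J1 Hp Hc) in Hd *.
split; first exact: (irr_iff Hp Hc Hi Hd Hinj Hs Hdiv).
split.
  move=> g h ng nh e; exact: (part1 Hp Hc Hi Hinj Hs Hd ng nh e).
exact: (part2 Hp Hc Hi Hd Hinj Hs Hdiv).
Qed.
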